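(* The set $\mathcal{D}$ of directed-convex polyominoes equals $Av_{\mathfrak{P}}(H,V,D)$, where $H=\begin{bmatrix}1&0&1\end{bmatrix}$, $V=\begin{bmatrix}1\\0\\1\end{bmatrix}$ and $D=\begin{bmatrix}1&1\\0&1\end{bmatrix}$.
   Context: A polyomino is a finite union of unit cells of $\mathbb{Z}\times\mathbb{Z}$ that is connected via edge adjacency, up to translation, identified with the binary matrix of its minimal bounding rectangle (entry $1$ iff the corresponding unit square is a cell; rows numbered bottom to top, and in displayed matrices the first written row is the top row). A matrix is a submatrix of another if obtained by deleting rows and/or columns; $Av_{\mathfrak{P}}(\mathcal{M})$ is the set of polyominoes with no submatrix in $\mathcal{M}$. A polyomino is convex if each of its rows and each of its columns is connected. An (internal) path of a polyomino is a sequence of distinct cells $(c_1,\dots,c_n)$ of the polyomino in which consecutive cells share an edge; the pair $(c_i,c_{i+1})$ is a north, south, east or west step according to the position of $c_{i+1}$ relative to $c_i$. A polyomino is directed if there is a cell (the source) from which every cell can be reached by a path using only north and east steps. A directed-convex polyomino is a polyomino that is both directed and convex. *)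

(* Defs.v *)
From mathcomp Require Import all_boot all_algebra.
Set Implicit Arguments. Unset Strict Implicit. Unset Printing Implicit Defensive.

(* A polyomino is represented (canonically, i.e. up to translation) by the
   boolean matrix P : 'M[bool]_(m, n) of its minimal bounding rectangle.
   Convention: row index i : 'I_m is the y-coordinate, numbered BOTTOM to TOP
   (row 0 is the bottom row); column index j : 'I_n is the x-coordinate,
   numbered left to right. *)

Definition cell (m n : nat) := ('I_m * 'I_n)%type.

Definition in_poly m n (P : 'M[bool]_(m, n)) (c : cell m n) : bool := P c.1 c.2.

Definition north_step m n (c c' : cell m n) : bool :=
  (c'.2 == c.2) && (c'.1 == (c.1).+1 :> nat).
Definition south_step m n (c c' : cell m n) : bool := north_step c' c.
Definition east_step m n (c c' : cell m n) : bool :=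
  (c'.1 == c.1) && (c'.2 == (c.2).+1 :> nat).
Definition west_step m n (c c' : cell m n) : bool := east_step c' c.

Definition adjacent m n (c c' : cell m n) : bool :=
  [|| north_step c c', south_step c c', east_step c c' | west_step c c'].

Definition internal_path m n (P : 'M[bool]_(m, n)) (step : rel (cell m n))
    (c c' : cell m n) (s : seq (cell m n)) : bool :=
  [&& uniq (c :: s), all (in_poly P) (c :: s), path step c s & last c s == c'].

Definition poly_connected m n (P : 'M[bool]_(m, n)) : Prop :=
  forall c c' : cell m n, in_poly P c -> in_poly P c' ->
    exists s, internal_path P (@adjacent m n) c c' s.

(* P is the matrix of a polyomino: nonempty, connected, and P is the minimal
   bounding rectangle (every row and every column contains a cell). *)
Definition is_polyomino m n (P : 'M[bool]_(m, n)) : Prop :=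
  [/\ exists c : cell m n, in_poly P c,
      forall i : 'I_m, exists j : 'I_n, P i j,
      forall j : 'I_n, exists i : 'I_m, P i j
    & poly_connected P].

Definition convex m n (P : 'M[bool]_(m, n)) : Prop :=
  (forall (i : 'I_m) (j1 j j2 : 'I_n),
      (j1 <= j <= j2)%N -> P i j1 -> P i j2 -> P i j) /\
  (forall (j : 'I_n) (i1 i i2 : 'I_m),
      (i1 <= i <= i2)%N -> P i1 j -> P i2 j -> P i j).

Definition north_or_east m n : rel (cell m n) :=
  fun c c' => north_step c c' || east_step c c'.

Definition directed m n (P : 'M[bool]_(m, n)) : Prop :=
  exists2 src : cell m n, in_poly P src &
    forall c : cell m n, in_poly P c ->
      exists s, internal_path P (@north_or_east m n) src c s.

Definition directed_convex m n (P : 'M[bool]_(m, n)) : Prop :=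
  directed P /\ convex P.

Definition submatrix k l m n (A : 'M[bool]_(k, l)) (P : 'M[bool]_(m, n)) : Prop :=
  exists (f : 'I_k -> 'I_m) (g : 'I_l -> 'I_n),
    [/\ forall a b : 'I_k, (a < b)%N -> (f a < f b)%N,
        forall a b : 'I_l, (a < b)%N -> (g a < g b)%N
      & forall a b, P (f a) (g b) = A a b].

(* Patterns (row 0 = bottom row):
   H = [1 0 1],  V = [1;0;1] (column),  D = displayed [[1,1],[0,1]], i.e.
   top row (index 1) = 1 1, bottom row (index 0) = 0 1. *)
Definition patH : 'M[bool]_(1, 3) := \matrix_(i < 1, j < 3) (j != 1%N :> nat).
Definition patV : 'M[bool]_(3, 1) := \matrix_(i < 3, j < 1) (i != 1%N :> nat).
Definition patD : 'M[bool]_(2, 2) :=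
  \matrix_(i < 2, j < 2) ((i == 1%N :> nat) || (j == 1%N :> nat)).

Definition avoids_HVD m n (P : 'M[bool]_(m, n)) : Prop :=
  ~ submatrix patH P /\ ~ submatrix patV P /\ ~ submatrix patD P.

(* Main.v *)
Require Import Defs.
From mathcomp Require Import all_boot all_algebra.
From mathcomp Require Import zify.
Set Implicit Arguments. Unset Strict Implicit. Unset Printing Implicit Defensive.

Lemma cross (T : Type) (e : rel T) (p : pred T) x s :
  path e x s -> p x -> ~~ p (last x s) ->
  exists s1 b s2, [/\ s = s1 ++ b :: s2, p (last x s1), ~~ p b & e (last x s1) b].
Proof.
elim: s x => [|y s IH] x /=; first by move=> _ ->.
case/andP=> exy pys px npl.
case: (boolP (p y)) => py.
  have [s1 [b [s2 [-> H1 H2 H3]]]] := IH y pys py npl.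
  by exists (y :: s1), b, s2.
by exists [::], y, s.
Qed.

Lemma all_split (T : eqType) (q : pred T) x s1 b s2 :
  all q (x :: s1 ++ b :: s2) -> q (last x s1) && q b.
Proof.
rewrite -cat_cons all_cat => /andP[/allP H1 /= /andP[-> _]]; rewrite andbT.
apply: H1; exact: mem_last.
Qed.

Lemma noe_mono m n (x : cell m n) s : path (@north_or_east m n) x s ->
  (x.1 <= (last x s).1)%N /\ (x.2 <= (last x s).2)%N.
Proof.
elim: s x => [|y s IH] x /=; first by [].
case/andP => hxy /IH [h1 h2].
move: hxy; rewrite /north_or_east /north_step /east_step.
case/orP => /andP[/eqP/(congr1 val) /= e1 /eqP e2]; split; lia.
Qed.

Definition key m n (c : cell m n) := (c.1 + c.2)%N.

Lemma noe_key m n (a b : cell m n) : north_or_east a b -> key b = (key a).+1.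
Proof.
rewrite /key /north_or_east /north_step /east_step.
case/orP => /andP[/eqP/(congr1 val) /= e1 /eqP e2]; lia.
Qed.

Lemma fwd m n (P : 'M[bool]_(m,n)) : directed_convex P -> avoids_HVD P.
Proof.
case=> [[src Hsrc Hpath] [Crow Ccol]].
split; [|split].
- case=> f [g [_ Hg Heq]].
  pose a : 'I_3 := @Ordinal 3 0 isT.
  pose b : 'I_3 := @Ordinal 3 1 isT.
  pose c : 'I_3 := @Ordinal 3 2 isT.
  have h0 := Heq ord0 a; have h1 := Heq ord0 b; have h2 := Heq ord0 c.
  rewrite mxE /= in h0; rewrite mxE /= in h1; rewrite mxE /= in h2.
  have := Crow (f ord0) (g a) (g b) (g c).
  by rewrite h0 h1 h2 (ltnW (Hg a b isT)) (ltnW (Hg b c isT)) => /(_ isT isT isT).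
- case=> f [g [Hf _ Heq]].
  pose a : 'I_3 := @Ordinal 3 0 isT.
  pose b : 'I_3 := @Ordinal 3 1 isT.
  pose c : 'I_3 := @Ordinal 3 2 isT.
  have h0 := Heq a ord0; have h1 := Heq b ord0; have h2 := Heq c ord0.
  rewrite mxE /= in h0; rewrite mxE /= in h1; rewrite mxE /= in h2.
  have := Ccol (g ord0) (f a) (f b) (f c).
  by rewrite h0 h1 h2 (ltnW (Hf a b isT)) (ltnW (Hf b c isT)) => /(_ isT isT isT).
- case=> f [g [Hf Hg Heq]].
  have h00 := Heq ord0 ord0; have h01 := Heq ord0 ord_max.
  have h10 := Heq ord_max ord0; have h11 := Heq ord_max ord_max.
  rewrite mxE /= in h00; rewrite mxE /= in h01;
  rewrite mxE /= in h10; rewrite mxE /= in h11.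
  set r0 := f ord0 in h00 h01 *; set r1 := f ord_max in h10 h11 *.
  set c0 := g ord0 in h00 h10 *; set c1 := g ord_max in h01 h11 *.
  have lr : (r0 < r1)%N by exact: Hf.
  have lc : (c0 < c1)%N by exact: Hg.
  have [s /and4P[_ _ Hp /eqP Hl]] := Hpath (r0, c1) h01.
  have [hs1 _] := noe_mono Hp; rewrite Hl /= in hs1.
  have [s' /and4P[_ Hall Hp' /eqP Hl']] := Hpath (r1, c0) h10.
  have nl : ~~ (fun x : cell m n => (x.1 <= r0)%N) (last src s').
    by rewrite Hl' /= -ltnNge.
  have [s1 [b [s2 [Es pa npb eab]]]] :=
    @cross _ _ (fun x : cell m n => (x.1 <= r0)%N) _ _ Hp' hs1 nl.
  rewrite Es in Hall Hp' Hl'.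
  have /andP[Pa _] := all_split Hall.
  move: Hp'; rewrite cat_path => /andP[_ Hp2].
  have [_ hc] := noe_mono Hp2.
  rewrite last_cat in Hl'; rewrite Hl' /= in hc.
  move: eab pa npb; rewrite /north_or_east /north_step /east_step /=.
  set a := last src s1.
  case/orP => /andP[/eqP/(congr1 val) /= e1 /eqP e2] pa npb; last by lia.
  have ea : a.1 = r0 by apply: ord_inj; lia.
  have := Crow r0 a.2 c0 c1; rewrite hc ltnW // h01 h00.
  by rewrite /in_poly ea in Pa; rewrite Pa => /(_ isT isT isT).
Qed.

Lemma no_pred m n (P : 'M[bool]_(m,n)) :
  (forall i : 'I_m, exists j, P i j) -> (forall j : 'I_n, exists i, P i j) ->
  poly_connected P -> convex P ->
  (forall (r0 r1 : 'I_m) (c0 c1 : 'I_n), (r0 < r1)%N -> (c0 < c1)%N ->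
     P r1 c0 -> P r1 c1 -> P r0 c1 -> P r0 c0) ->
  forall c : cell m n, in_poly P c ->
    (forall c', in_poly P c' -> ~~ north_or_east c' c) ->
  c.1 = 0 :> nat /\ c.2 = 0 :> nat.
Proof.
move=> Hrow Hcol Hconn [Crow Ccol] HD [i j] Hc Hnp.
rewrite /in_poly /= in Hc.
split => /=.
- apply/eqP; rewrite -leqn0 leqNgt; apply/negP => ipos.
  have hi' : (i.-1 < m)%N by rewrite (leq_ltn_trans (leq_pred _) (ltn_ord i)).
  have [k Hk] := Hrow (Ordinal hi').
  have [s /and4P[_ Hall Hp /eqP Hl]] := Hconn (i,j) (Ordinal hi', k) Hc Hk.
  have nl : ~~ (fun x : cell m n => (i <= x.1)%N) (last (i,j) s).
    by rewrite Hl /= -ltnNge; lia.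
  have [s1 [b [s2 [Es pa npb eab]]]] :=
    @cross _ _ (fun x : cell m n => (i <= x.1)%N) _ _ Hp (leqnn _) nl.
  rewrite Es in Hall.
  have /andP[Pa Pb] := all_split Hall.
  move: eab pa npb Pa Pb; set a := last (i, j) s1.
  rewrite /adjacent /north_step /south_step /east_step /west_step /in_poly /=.
  case/or4P => /andP[/eqP/(congr1 val) /= e1 /eqP e2] pa npb Pa Pb; try lia.
  have ea : a.1 = i by apply: ord_inj; lia.
  have eb : a.2 = b.2 by apply: ord_inj.
  have Pbj : P b.1 j.
    case: (ltngtP a.2 j) => h.
    + have hj : (j.-1 < n)%N by rewrite (leq_ltn_trans (leq_pred _) (ltn_ord j)).
      have := Crow i a.2 (Ordinal hj) j; rewrite /= -ea Pa ea Hc.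
      have -> : (a.2 <= j.-1 <= j)%N by lia.
      move=> /(_ isT isT isT) Pw.
      have := Hnp (i, Ordinal hj) Pw.
      rewrite /north_or_east /east_step /= eqxx /= prednK ?eqxx ?orbT //; lia.
    + apply: (HD b.1 i j a.2) => //; try lia.
      * by rewrite -ea.
      * by rewrite eb.
    + by have -> : j = b.2 by apply: ord_inj; rewrite -eb h.
  have := Hnp (b.1, j) Pbj.
  by rewrite /north_or_east /north_step /= eqxx /= -e2 ea eqxx.
- apply/eqP; rewrite -leqn0 leqNgt; apply/negP => jpos.
  have hj' : (j.-1 < n)%N by rewrite (leq_ltn_trans (leq_pred _) (ltn_ord j)).
  have [k Hk] := Hcol (Ordinal hj').
  have [s /and4P[_ Hall Hp /eqP Hl]] := Hconn (i,j) (k, Ordinal hj') Hc Hk.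
  have nl : ~~ (fun x : cell m n => (j <= x.2)%N) (last (i,j) s).
    by rewrite Hl /= -ltnNge; lia.
  have [s1 [b [s2 [Es pa npb eab]]]] :=
    @cross _ _ (fun x : cell m n => (j <= x.2)%N) _ _ Hp (leqnn _) nl.
  rewrite Es in Hall.
  have /andP[Pa Pb] := all_split Hall.
  move: eab pa npb Pa Pb; set a := last (i, j) s1.
  rewrite /adjacent /north_step /south_step /east_step /west_step /in_poly /=.
  case/or4P => /andP[/eqP/(congr1 val) /= e1 /eqP e2] pa npb Pa Pb; try lia.
  have ea : a.2 = j by apply: ord_inj; lia.
  have eb : a.1 = b.1 by apply: ord_inj.
  have Pib : P i b.2.
    case: (ltngtP a.1 i) => h.
    + have hi : (i.-1 < m)%N by rewrite (leq_ltn_trans (leq_pred _) (ltn_ord i)).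
      have := Ccol j a.1 (Ordinal hi) i; rewrite /= -ea Pa ea Hc.
      have -> : (a.1 <= i.-1 <= i)%N by lia.
      move=> /(_ isT isT isT) Pw.
      have := Hnp (Ordinal hi, j) Pw.
      rewrite /north_or_east /north_step /= eqxx /= prednK ?eqxx //; lia.
    + apply: (HD i a.1 b.2 j) => //; try lia.
      * by rewrite eb.
      * by rewrite -ea.
    + by have -> : i = b.1 by apply: ord_inj; rewrite -eb h.
  have := Hnp (i, b.2) Pib.
  by rewrite /north_or_east /east_step /= eqxx /= -e2 ea eqxx orbT.
Qed.

Lemma dir m n (P : 'M[bool]_(m,n)) :
  (forall i : 'I_m, exists j, P i j) -> (forall j : 'I_n, exists i, P i j) ->
  poly_connected P -> convex P ->
  (forall (r0 r1 : 'I_m) (c0 c1 : 'I_n), (r0 < r1)%N -> (c0 < c1)%N ->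
     P r1 c0 -> P r1 c1 -> P r0 c1 -> P r0 c0) ->
  (exists c : cell m n, in_poly P c) -> directed P.
Proof.
move=> Hrow Hcol Hconn Hconv HD [[i0 j0] Hc0].
have hm : (0 < m)%N by exact: (leq_ltn_trans (leq0n _) (ltn_ord i0)).
have hn : (0 < n)%N by exact: (leq_ltn_trans (leq0n _) (ltn_ord j0)).
pose src : cell m n := (Ordinal hm, Ordinal hn).
suff H : forall k (c : cell m n), (key c < k)%N -> in_poly P c ->
    exists s, [&& path (@north_or_east m n) src s, last src s == c
                & all (in_poly P) (src :: s)].
  have [s0 /and3P[_ _ /andP[Ps _]]] := H _ (i0,j0) (ltnSn _) Hc0.
  exists src => // c Hc; have [s /and3P[Hp Hl Ha]] := H _ c (ltnSn _) Hc.
  exists s; rewrite /internal_path Hp Hl Ha !andbT.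
  have tr : transitive (fun a b : 'I_m * 'I_n => (key a < key b)%N).
    by move=> ? ? ?; exact: ltn_trans.
  have ir : irreflexive (fun a b : 'I_m * 'I_n => (key a < key b)%N).
    by move=> ?; exact: ltnn.
  apply: (sorted_uniq tr ir).
  by apply: sub_path Hp => a b /noe_key ->.
elim=> [//|k IH] c Hk Hc.
case: (boolP [exists c' : 'I_m * 'I_n, in_poly P c' && north_or_east c' c]).
- case/existsP=> c' /andP[Hc' Hnoe].
  have Hk' : (key c' < k)%N by move: Hk; rewrite (noe_key Hnoe).
  have [s /and3P[Hp /eqP Hl Ha]] := IH c' Hk' Hc'.
  exists (rcons s c).
  by rewrite rcons_path last_rcons eqxx -rcons_cons all_rcons Hc Ha Hp Hl Hnoe.
- rewrite negb_exists => /forallP Hn.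
  have [e1 e2] := no_pred Hrow Hcol Hconn Hconv HD Hc
     (fun c' Hc' => ltac:(by move: (Hn c'); rewrite Hc')).
  have Ec : c = src by case: c e1 e2 {Hk Hc Hn} => [c1 c2] /= e1 e2;
     congr pair; apply: ord_inj.
  by exists [::]; rewrite /= Ec eqxx -Ec Hc.
Qed.

Lemma bwd m n (P : 'M[bool]_(m,n)) : is_polyomino P -> avoids_HVD P -> directed_convex P.
Proof.
case=> Hex Hrow Hcol Hconn [nH [nV nD]].
have Hconv : convex P.
  split.
  - move=> i j1 j j2 /andP[h1 h2] P1 P2; apply/negPn/negP => Pn.
    have l1 : (j1 < j)%N.
      rewrite ltn_neqAle h1 andbT; apply/negP => /eqP E.
      by move: P1; rewrite (ord_inj E) (negbTE Pn).
    have l2 : (j < j2)%N.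
      rewrite ltn_neqAle h2 andbT; apply/negP => /eqP E.
      by move: P2; rewrite -(ord_inj E) (negbTE Pn).
    apply: nH; exists (fun _ => i),
      (fun b : 'I_3 => if val b == 0 then j1 else if val b == 1 then j else j2).
    split.
    + by move=> [[|a] ha] [[|b] hb].
    + by move=> [[|[|[|a]]] ha] [[|[|[|b]]] hb] //=; lia.
    + by move=> a [[|[|[|b]]] hb]; rewrite mxE //= ?P1 ?P2 ?(negbTE Pn).
  - move=> j i1 i i2 /andP[h1 h2] P1 P2; apply/negPn/negP => Pn.
    have l1 : (i1 < i)%N.
      rewrite ltn_neqAle h1 andbT; apply/negP => /eqP E.
      by move: P1; rewrite (ord_inj E) (negbTE Pn).
    have l2 : (i < i2)%N.
      rewrite ltn_neqAle h2 andbT; apply/negP => /eqP E.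
      by move: P2; rewrite -(ord_inj E) (negbTE Pn).
    apply: nV; exists
      (fun b : 'I_3 => if val b == 0 then i1 else if val b == 1 then i else i2),
      (fun _ => j).
    split.
    + by move=> [[|[|[|a]]] ha] [[|[|[|b]]] hb] //=; lia.
    + by move=> [[|a] ha] [[|b] hb].
    + by move=> [[|[|[|b]]] hb] a; rewrite mxE //= ?P1 ?P2 ?(negbTE Pn).
have HD : forall (r0 r1 : 'I_m) (c0 c1 : 'I_n), (r0 < r1)%N -> (c0 < c1)%N ->
     P r1 c0 -> P r1 c1 -> P r0 c1 -> P r0 c0.
  move=> r0 r1 c0 c1 lr lc P10 P11 P01; apply/negPn/negP => Pn.
  apply: nD; exists (fun a : 'I_2 => if val a == 0 then r0 else r1),
    (fun b : 'I_2 => if val b == 0 then c0 else c1).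
  split.
  + by move=> [[|[|a]] ha] [[|[|b]] hb] //=.
  + by move=> [[|[|a]] ha] [[|[|b]] hb] //=.
  + by move=> [[|[|a]] ha] [[|[|b]] hb]; rewrite mxE //= ?(negbTE Pn).
split => //; exact: dir.
Qed.

Theorem proposition13 (m n : nat) (P : 'M[bool]_(m, n)) :
  is_polyomino P -> (directed_convex P <-> avoids_HVD P).
Proof.
move=> HP; split; [exact: fwd | exact: bwd].
Qed.
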